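(* Let $\langle B,\wedge,{}'\rangle$ be an algebra with $\wedge$ binary and ${}'$ unary satisfying $x\wedge(y\wedge z)\approx z\wedge(y\wedge x)$, $x''\approx x$, and $x'\approx (x\wedge y)'\wedge(x\wedge y')'$. Then $x\wedge y=y\wedge x$ for all $x,y\in B$. *)


Theorem corollary7p7 (B : Type) (meet : B -> B -> B) (c : B -> B)
  (H1 : forall x y z : B, meet x (meet y z) = meet z (meet y x))
  (H2 : forall x : B, c (c x) = x)
  (H3 : forall x y : B, c x = meet (c (meet x y)) (c (meet x (c y)))) :
  forall x y : B, meet x y = meet y x.
Proof.
  intros a b.
  assert (E3 : forall v0, (c (c v0)) = v0).
  { intros v0. pose proof (H2 v0) as I0. congruence. }
  assert (E4 : forall v0 v1 v2, (meet v2 (meet v1 v0)) = (meet v0 (meet v1 v2))).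
  { intros v0 v1 v2. pose proof (H1 v2 v1 v0) as I0. congruence. }
  assert (E5 : forall v0 v1, (c v0) = (meet (c (meet v0 v1)) (c (meet v0 (c v1))))).
  { intros v0 v1. pose proof (H3 v0 v1) as I0. congruence. }
  assert (E6 : forall v0 v1, (meet (c (meet v1 (c v0))) (c (meet v1 v0))) = (c v1)).
  { intros v0 v1. pose proof (E3 v0) as I0. pose proof (E5 v1 (c v0)) as I1. congruence. }
  assert (E9 : forall v0 v1 v2, (meet (c (meet v0 (c (meet v1 v2)))) (c (meet v2 (meet v1 v0)))) = (c v0)).
  { intros v0 v1 v2. pose proof (E4 v2 v1 v0) as I0. pose proof (E6 (meet v1 v2) v0) as I1. congruence. }
  assert (E14 : forall v0 v1 v2, (meet (c (meet v0 (meet v1 v2))) (c (meet v2 (c (meet v1 v0))))) = (c v2)).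
  { intros v0 v1 v2. pose proof (E4 v2 v1 v0) as I0. pose proof (E5 v2 (meet v1 v0)) as I1. congruence. }
  assert (E12 : forall v0 v1 v2, (meet v1 (c v0)) = (meet (c (meet v0 v2)) (meet (c (meet v0 (c v2))) v1))).
  { intros v0 v1 v2. pose proof (E6 v2 v0) as I0. pose proof (E4 (c (meet v0 v2)) (c (meet v0 (c v2))) v1) as I1. congruence. }
  assert (E13 : forall v0 v1 v2, (meet (c (meet v2 (c v1))) (meet (c (meet v2 v1)) v0)) = (meet v0 (c v2))).
  { intros v0 v1 v2. pose proof (E3 v1) as I0. pose proof (E12 v2 v0 (c v1)) as I1. congruence. }
  assert (E15 : forall v0 v1 v2, (meet (c v1) (meet v2 (c (meet v1 v0)))) = (meet (meet (c (meet v1 v0)) v2) (c v1))).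
  { intros v0 v1 v2. pose proof (E4 (c (meet v1 v0)) v2 (c v1)) as I0. pose proof (E13 v2 v0 v1) as I1. pose proof (E12 v1 (meet (c (meet v1 v0)) v2) v0) as I2. congruence. }
  assert (E191 : forall v0 v1, (meet (c v1) (c v0)) = (meet (c v0) (c v1))).
  { intros v0 v1. pose proof (E9 v1 a v0) as I0. pose proof (E14 v0 a v1) as I1. pose proof (E15 (meet a v1) v0 (c (meet v1 (c (meet a v0))))) as I2. congruence. }
  assert (E192 : forall v0 v1, (meet (c v1) v0) = (meet v0 (c v1))).
  { intros v0 v1. pose proof (E3 v0) as I0. pose proof (E3 v0) as I1. pose proof (E191 (c v0) v1) as I2. congruence. }
  assert (E193 : forall v0 v1, (meet v1 v0) = (meet v0 v1)).
  { intros v0 v1. pose proof (E3 v1) as I0. pose proof (E3 v1) as I1. pose proof (E192 v0 (c v1)) as I2. congruence. }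
  pose proof (E193 a b) as I0. congruence.
Qed.
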